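(* Let $P$ be a finite $(3+1)$-free poset and let $I^P_{\mathrm{plac}}$ be the two-sided ideal of $\mathcal{U}_P$ defined below. Then for all integers $k,\ell$ and all subsets $S\subseteq P$, $$e^P_k(\mathbf{u}_S)\,e^P_\ell(\mathbf{u}_S)\equiv e^P_\ell(\mathbf{u}_S)\,e^P_k(\mathbf{u}_S)\pmod{I^P_{\mathrm{plac}}}.$$
   Context: A poset is $(3+1)$-free if it has no induced subposet isomorphic to the disjoint union of a 3-element chain and a 1-element chain. For $a,b\in P$ write $a<_P b$ if $a$ is strictly less than $b$, and $a\sim_P b$ if $a,b$ are incomparable or equal. $\mathcal{U}_P=\mathbb{Z}\langle u_a : a\in P\rangle$ is the free associative ring on noncommuting variables $u_a$. For $S\subseteq P$ and $k\in\mathbb{Z}$, $e^P_k(\mathbf{u}_S)=\sum u_{a_1}u_{a_2}\cdots u_{a_k}$, summed over all $a_1,\dots,a_k\in S$ with $a_1>_P a_2>_P\cdots>_P a_k$; by convention $e^P_0(\mathbf{u}_S)=1$ (even if $S=\varnothing$) and $e^P_k(\mathbf{u}_S)=0$ for $k<0$ or $k>|S|$. $I^P_{\mathrm{plac}}$ is the two-sided ideal generated by: (1) $u_bu_au_c-u_bu_cu_a$ whenever $a<_P b$, $c\not<_P b$ and $a<_P c$; (2) $u_cu_au_b-u_au_cu_b$ whenever $b\not<_P a$, $b<_P c$ and $a<_P c$; (3) $u_cu_au_b-u_bu_cu_a$ whenever $a\sim_P b$, $b\sim_P c$ and $a<_P c$. *)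

(* Defs.v *)
From HB Require Import structures.
From mathcomp Require Import all_boot all_order all_algebra.
Set Implicit Arguments. Unset Strict Implicit. Unset Printing Implicit Defensive.
Import Order.TTheory GRing.Theory Num.Theory.
Local Open Scope order_scope.

(* The free associative ring Z<u_a : a in P> is modelled by coefficient
   functions on words (seq P): the element sum_w c_w u_{w_1}...u_{w_n}
   is represented by w |-> c_w.  All elements used below have finite
   support; ideal membership is defined inductively (see in_Iplac). *)

Section FreeRing.
Variables (d : Order.disp_t) (P : finPOrderType d).

Definition ncpoly := seq P -> int.

Definition nc_zero : ncpoly := fun _ => 0%R.
Definition nc_add (p q : ncpoly) : ncpoly := fun w => (p w + q w)%R.
Definition nc_opp (p : ncpoly) : ncpoly := fun w => (- p w)%R.
Definition nc_sub (p q : ncpoly) : ncpoly := nc_add p (nc_opp q).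
Definition nc_mul (p q : ncpoly) : ncpoly :=
  fun w => (\sum_(i < (size w).+1) p (take i w) * q (drop i w))%R.
Definition nc_word (v : seq P) : ncpoly := fun w => if w == v then 1%R else 0%R.

Definition simP (a b : P) : bool := ~~ (a < b) && ~~ (b < a).

Definition free31 : Prop :=
  forall x y z w : P, x < y -> y < z ->
    ~ [/\ ~~ (w >=< x), ~~ (w >=< y) & ~~ (w >=< z)].

Definition plac_gen (g : ncpoly) : Prop :=
  exists a b c : P,
    [/\ a < b, ~~ (c < b), a < c & g = nc_sub (nc_word [:: b; a; c]) (nc_word [:: b; c; a])]
 \/ [/\ ~~ (b < a), b < c, a < c & g = nc_sub (nc_word [:: c; a; b]) (nc_word [:: a; c; b])]
 \/ [/\ simP a b, simP b c, a < c & g = nc_sub (nc_word [:: c; a; b]) (nc_word [:: b; c; a])].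

Inductive in_Iplac : ncpoly -> Prop :=
| Ip_zero : in_Iplac nc_zero
| Ip_gen g : plac_gen g -> in_Iplac g
| Ip_add p q : in_Iplac p -> in_Iplac q -> in_Iplac (nc_add p q)
| Ip_opp p : in_Iplac p -> in_Iplac (nc_opp p)
| Ip_mull v p : in_Iplac p -> in_Iplac (nc_mul (nc_word v) p)
| Ip_mulr v p : in_Iplac p -> in_Iplac (nc_mul p (nc_word v))
| Ip_ext p q : (forall w, p w = q w) -> in_Iplac p -> in_Iplac q.

(* e^P_k(u_S) = sum of u_{a_1}...u_{a_k} with a_i in S, a_1 > ... > a_k.
   For k < 0 or k > |S| no such word exists, giving 0; k = 0 gives 1. *)
Definition elemP (k : int) (S : {set P}) : ncpoly :=
  fun w => if [&& ((size w)%:Z == k)%R, all (fun a => a \in S) w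
              & sorted (fun a b => b < a) w] then 1%R else 0%R.

End FreeRing.

(* Main.v *)
Require Import Defs.
From HB Require Import structures.
From mathcomp Require Import all_boot all_order all_algebra.
From mathcomp Require Import ring.
Set Implicit Arguments. Unset Strict Implicit. Unset Printing Implicit Defensive.
Import Order.TTheory GRing.Theory Num.Theory.
Local Open Scope ring_scope.
Local Open Scope order_scope.

Section Alg.
Variables (d : Order.disp_t) (P : finPOrderType d).
Local Notation word := (seq P).
Local Notation nc := (ncpoly P).

Definition peq (p q : nc) := forall w, p w = q w.

Lemma Iext (p q : nc) : peq p q -> in_Iplac p -> in_Iplac q.
Proof. by move=> H Hp; apply: Ip_ext Hp. Qed.

Lemma Icomb (p q r : nc) : in_Iplac p -> in_Iplac q ->
  (forall w, r w = (p w + q w)%R) -> in_Iplac r.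
Proof. by move=> Hp Hq H; apply: Iext (Ip_add Hp Hq) => w; rewrite H. Qed.

Lemma Iopp (p r : nc) : in_Iplac p -> (forall w, r w = (- p w)%R) -> in_Iplac r.
Proof. by move=> Hp H; apply: Iext (Ip_opp Hp) => w; rewrite H. Qed.

Lemma Icombs (p q r : nc) : in_Iplac p -> in_Iplac q ->
  (forall w, r w = (p w - q w)%R) -> in_Iplac r.
Proof. by move=> Hp Hq H; apply: Icomb Hp (Ip_opp Hq) _ => w; rewrite H. Qed.

Lemma Izero (r : nc) : (forall w, r w = 0%R) -> in_Iplac r.
Proof. move=> H; apply: (@Iext (@nc_zero _ P) r); last exact: Ip_zero. by move=> w; rewrite H. Qed.

Lemma take_eq_size (w v : word) (i : nat) : (i <= size w)%N -> take i w = v -> i = size v.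
Proof. by move=> Hi <-; rewrite size_take_min; apply/esym/minn_idPl. Qed.

Lemma mul_wordl (v : word) (p : nc) (w : word) :
  nc_mul (nc_word v) p w =
  if ((size v <= size w)%N && (take (size v) w == v)) then p (drop (size v) w) else 0%R.
Proof.
rewrite /nc_mul /nc_word.
case: ifP => [/andP [Hs /eqP Ht]|Hn].
  have Hlt : (size v < (size w).+1)%N by [].
  rewrite (bigD1 (Ordinal Hlt)) //= Ht eqxx mul1r big1 ?addr0 // => i /eqP Hi.
  case: ifP => [/eqP Htk|]; last by rewrite mul0r.
  exfalso; apply: Hi; apply: val_inj => /=.
  by apply: take_eq_size Htk; rewrite -ltnS.
rewrite big1 // => i _; case: ifP => [/eqP Htk|]; last by rewrite mul0r.
have Hi := take_eq_size (ltnSE (ltn_ord i)) Htk.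
by move: Hn; rewrite -Hi (ltnSE (ltn_ord i)) Htk eqxx.
Qed.

Lemma drop_eq_size (w v : word) (i : nat) : (i <= size w)%N -> drop i w = v -> i = (size w - size v)%N.
Proof. by move=> Hi <-; rewrite size_drop subKn. Qed.

Lemma mul_wordr (v : word) (p : nc) (w : word) :
  nc_mul p (nc_word v) w =
  if ((size v <= size w)%N && (drop (size w - size v) w == v)) then p (take (size w - size v) w) else 0%R.
Proof.
rewrite /nc_mul /nc_word.
case: ifP => [/andP [Hs /eqP Ht]|Hn].
  have Hlt : (size w - size v < (size w).+1)%N by rewrite ltnS leq_subr.
  rewrite (bigD1 (Ordinal Hlt)) //= Ht eqxx mulr1 big1 ?addr0 // => i /eqP Hi.
  case: ifP => [/eqP Htk|]; last by rewrite mulr0.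
  exfalso; apply: Hi; apply: val_inj => /=.
  by apply: drop_eq_size Htk; rewrite -ltnS.
rewrite big1 // => i _; case: ifP => [/eqP Htk|]; last by rewrite mulr0.
have Hi := drop_eq_size (ltnSE (ltn_ord i)) Htk.
move: Hn; rewrite -Hi Htk eqxx andbT.
by rewrite -Htk size_drop leq_subr.
Qed.

Lemma mul_word_word (u v : word) : peq (nc_mul (nc_word u) (nc_word v)) (nc_word (u ++ v)).
Proof.
move=> w; rewrite mul_wordl /nc_word.
case: ifP => [/andP [Hs /eqP Ht]|Hn].
  have Hw : w = u ++ drop (size u) w by rewrite -{1}(cat_take_drop (size u) w) Ht.
  rewrite {2}Hw eqseq_cat // eqxx /=.
  by case: (_ == v).
case: eqP => // Hw; exfalso; move: Hn.
by rewrite Hw size_cat leq_addr take_size_cat // eqxx.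
Qed.

Lemma mul_addl (p q r : nc) : peq (nc_mul (nc_add p q) r) (nc_add (nc_mul p r) (nc_mul q r)).
Proof. by move=> w; rewrite /nc_mul /nc_add -big_split /=; apply: eq_bigr => i _; rewrite mulrDl. Qed.

Lemma mul_addr (p q r : nc) : peq (nc_mul p (nc_add q r)) (nc_add (nc_mul p q) (nc_mul p r)).
Proof. by move=> w; rewrite /nc_mul /nc_add -big_split /=; apply: eq_bigr => i _; rewrite mulrDr. Qed.

Lemma mul_oppl (p r : nc) : peq (nc_mul (nc_opp p) r) (nc_opp (nc_mul p r)).
Proof. by move=> w; rewrite /nc_mul /nc_opp -sumrN; apply: eq_bigr => i _; rewrite mulNr. Qed.

Lemma mul_oppr (p r : nc) : peq (nc_mul p (nc_opp r)) (nc_opp (nc_mul p r)).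
Proof. by move=> w; rewrite /nc_mul /nc_opp -sumrN; apply: eq_bigr => i _; rewrite mulrN. Qed.

Lemma mul_0l (r : nc) : peq (nc_mul (@nc_zero _ P) r) (@nc_zero _ P).
Proof. by move=> w; rewrite /nc_mul /(@nc_zero _ P) big1 // => i _; rewrite mul0r. Qed.

Lemma mul_0r (r : nc) : peq (nc_mul r (@nc_zero _ P)) (@nc_zero _ P).
Proof. by move=> w; rewrite /nc_mul /(@nc_zero _ P) big1 // => i _; rewrite mulr0. Qed.

Lemma mul_extl (p p' r : nc) : peq p p' -> peq (nc_mul p r) (nc_mul p' r).
Proof. by move=> H w; rewrite /nc_mul; apply: eq_bigr => i _; rewrite H. Qed.

Lemma mul_extr (p r r' : nc) : peq r r' -> peq (nc_mul p r) (nc_mul p r').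
Proof. by move=> H w; rewrite /nc_mul; apply: eq_bigr => i _; rewrite H. Qed.

Definition nsum (L : seq word) : nc := fun w => (count_mem w L)%:Z.

Lemma nsum_nil : peq (nsum [::]) (@nc_zero _ P). Proof. by []. Qed.

Lemma nsum_cons v L : peq (nsum (v :: L)) (nc_add (nc_word v) (nsum L)).
Proof. by move=> w; rewrite /nsum /nc_add /nc_word /= eq_sym; case: (w == v); rewrite ?PoszD. Qed.

Lemma nsum_cat L1 L2 : peq (nsum (L1 ++ L2)) (nc_add (nsum L1) (nsum L2)).
Proof. by move=> w; rewrite /nsum /nc_add count_cat PoszD. Qed.

Lemma nsum_perm L1 L2 : perm_eq L1 L2 -> peq (nsum L1) (nsum L2).
Proof. by move=> /permP H w; rewrite /nsum H. Qed.

Lemma I_mull_nsum L p : in_Iplac p -> in_Iplac (nc_mul (nsum L) p).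
Proof.
move=> Hp; elim: L => [|v L IH].
  by apply: Izero => w; rewrite (mul_extl _ nsum_nil) mul_0l.
apply: Icomb (Ip_mull v Hp) IH _ => w.
by rewrite (mul_extl _ (nsum_cons v L)) mul_addl.
Qed.

Lemma I_mulr_nsum L p : in_Iplac p -> in_Iplac (nc_mul p (nsum L)).
Proof.
move=> Hp; elim: L => [|v L IH].
  by apply: Izero => w; rewrite (mul_extr _ nsum_nil) mul_0r.
apply: Icomb (Ip_mulr v Hp) IH _ => w.
by rewrite (mul_extr _ (nsum_cons v L)) mul_addr.
Qed.

Definition lmul (A B : seq word) : seq word := flatten [seq [seq x ++ y | y <- B] | x <- A].

Lemma lmul_cons x A B : lmul (x :: A) B = [seq x ++ y | y <- B] ++ lmul A B.
Proof. by []. Qed.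

Lemma lmul_nil A : lmul [::] A = [::]. Proof. by []. Qed.

Lemma lmul_nilr A : lmul A [::] = [::]. Proof. by elim: A. Qed.

Lemma nsum_map_cat v L : peq (nsum [seq v ++ y | y <- L]) (nc_mul (nc_word v) (nsum L)).
Proof.
elim: L => [|u L IH] w.
  by rewrite (mul_extr _ nsum_nil) mul_0r.
rewrite /= nsum_cons (mul_extr _ (nsum_cons u L)) mul_addr /nc_add IH.
by rewrite mul_word_word.
Qed.

Lemma nsum_lmul A B : peq (nsum (lmul A B)) (nc_mul (nsum A) (nsum B)).
Proof.
elim: A => [|x A IH] w.
  by rewrite (mul_extl _ nsum_nil) mul_0l.
rewrite lmul_cons nsum_cat (mul_extl _ (nsum_cons x A)) mul_addl /nc_add IH.
by rewrite nsum_map_cat.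
Qed.

Definition LC (A B : seq word) := in_Iplac (nc_sub (nsum A) (nsum B)).
Definition wc (u v : word) := LC [:: u] [:: v].

Lemma LC_refl A : LC A A.
Proof. by apply: Izero => w; rewrite /nc_sub /nc_add /nc_opp subrr. Qed.

Lemma LC_sym A B : LC A B -> LC B A.
Proof. by move=> H; apply: Iopp H _ => w; rewrite /nc_sub /nc_add /nc_opp opprB. Qed.

Lemma LC_trans A B C : LC A B -> LC B C -> LC A C.
Proof.
move=> H1 H2; apply: Icomb H1 H2 _ => w.
by rewrite /nc_sub /nc_add /nc_opp addrA subrK.
Qed.

Lemma LC_cat A B C D : LC A B -> LC C D -> LC (A ++ C) (B ++ D).
Proof.
move=> H1 H2; apply: Icomb H1 H2 _ => w.
rewrite /nc_sub /nc_add /nc_opp !nsum_cat /nc_add.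
by rewrite opprD addrACA.
Qed.

Lemma LC_peq A A' B B' : peq (nsum A) (nsum A') -> peq (nsum B) (nsum B') -> LC A B -> LC A' B'.
Proof. by move=> H1 H2 H; apply: Iext H => w; rewrite /nc_sub /nc_add /nc_opp H1 H2. Qed.

Lemma LC_perm A A' B B' : perm_eq A A' -> perm_eq B B' -> LC A B -> LC A' B'.
Proof. by move=> H1 H2; apply: LC_peq; apply: nsum_perm. Qed.

Lemma LC_eqperm A B : perm_eq A B -> LC A B.
Proof. by move=> H; apply: LC_perm (LC_refl A); rewrite ?perm_refl. Qed.

Lemma LC_cancel A B C D : LC (A ++ C) (B ++ D) -> LC C D -> LC A B.
Proof.
move=> H1 H2; apply: Icombs H1 H2 _ => w.
rewrite /nc_sub /nc_add /nc_opp !nsum_cat /nc_add.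
ring.
Qed.

Lemma LC_mull M A B : LC A B -> LC (lmul M A) (lmul M B).
Proof.
move=> H; apply: Iext (I_mull_nsum M H) => w.
rewrite /nc_sub mul_addr /nc_add (mul_oppr _ _ w) /nc_opp.
by rewrite !nsum_lmul.
Qed.

Lemma LC_mulr M A B : LC A B -> LC (lmul A M) (lmul B M).
Proof.
move=> H; apply: Iext (I_mulr_nsum M H) => w.
rewrite /nc_sub mul_addl /nc_add (mul_oppl _ _ w) /nc_opp.
by rewrite !nsum_lmul.
Qed.

Lemma LC_map (T : eqType) (f g : T -> word) (L : seq T) :
  (forall x, x \in L -> wc (f x) (g x)) -> LC (map f L) (map g L).
Proof.
elim: L => [|x L IH] H /=; first exact: LC_refl.
apply: (@LC_cat [:: f x] [:: g x]); first by apply: H; rewrite inE eqxx.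
by apply: IH => y Hy; apply: H; rewrite inE Hy orbT.
Qed.

End Alg.

Section Words.
Variables (d : Order.disp_t) (P : finPOrderType d).
Local Notation word := (seq P).
Local Notation nc := (ncpoly P).

Lemma nsum1 (u : word) : peq (nsum [:: u]) (nc_word u).
Proof. by move=> w; rewrite /nsum /nc_word /= addn0 eq_sym; case: (w == u). Qed.

Lemma wc_gen (u v : word) : plac_gen (nc_sub (nc_word u) (nc_word v)) -> wc u v.
Proof.
move=> H; apply: Iext (Ip_gen H) => w.
by rewrite /nc_sub /nc_add /nc_opp !nsum1.
Qed.

Lemma wc_rel1 (a b c : P) : a < b -> ~~ (c < b) -> a < c -> wc [:: b; a; c] [:: b; c; a].
Proof. by move=> H1 H2 H3; apply: wc_gen; exists a, b, c; left. Qed.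

Lemma wc_rel2 (a b c : P) : ~~ (b < a) -> b < c -> a < c -> wc [:: c; a; b] [:: a; c; b].
Proof. by move=> H1 H2 H3; apply: wc_gen; exists a, b, c; right; left. Qed.

Lemma wc_rel3 (a b c : P) : simP a b -> simP b c -> a < c -> wc [:: c; a; b] [:: b; c; a].
Proof. by move=> H1 H2 H3; apply: wc_gen; exists a, b, c; right; right. Qed.

Lemma wc_refl (u : word) : wc u u. Proof. exact: LC_refl. Qed.
Lemma wc_sym (u v : word) : wc u v -> wc v u. Proof. exact: LC_sym. Qed.
Lemma wc_trans (u v w : word) : wc u v -> wc v w -> wc u w. Proof. exact: LC_trans. Qed.

Lemma lmul1l (u : word) (A : seq word) : lmul [:: u] A = [seq u ++ y | y <- A].
Proof. by rewrite /lmul /= cats0. Qed.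

Lemma lmul1r (A : seq word) (v : word) : lmul A [:: v] = [seq x ++ v | x <- A].
Proof. by elim: A => //= x A IH; rewrite lmul_cons IH. Qed.

Lemma wc_ctx (x u v y : word) : wc u v -> wc (x ++ u ++ y) (x ++ v ++ y).
Proof.
move=> H; have H1 := LC_mulr [:: y] (LC_mull [:: x] H).
by move: H1; rewrite /lmul /= -!catA.
Qed.

Lemma wc_pre (x u v : word) : wc u v -> wc (x ++ u) (x ++ v).
Proof. by move=> H; have := wc_ctx x [::] H; rewrite !cats0. Qed.

Lemma wc_suf (u v y : word) : wc u v -> wc (u ++ y) (v ++ y).
Proof. by move=> H; have := wc_ctx [::] y H. Qed.

Definition gtr := fun a b : P => b < a.

Lemma gtr_trans : transitive gtr.
Proof. by move=> b a c H1 H2; rewrite /gtr (lt_trans H2 H1). Qed.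

Lemma wcG (x y : P) (C : word) : sorted gtr (x :: C) -> (forall c, c \in C -> c < y) ->
  ~~ (y < x) -> wc (x :: C ++ [:: y]) (x :: y :: C).
Proof.
elim: C x => [|c C IH] x Hs Hy Hyx; first exact: wc_refl.
move: Hs => /= /andP [Hcx Hs].
have Hcy : c < y by apply: Hy; rewrite inE eqxx.
have H1 : wc (c :: C ++ [:: y]) (c :: y :: C).
  apply: IH => //; first by move=> c' Hc'; apply: Hy; rewrite inE Hc' orbT.
  by rewrite lt_gtF.
have H2 := wc_pre [:: x] H1.
apply: wc_trans H2 _.
have H3 := wc_suf C (wc_rel1 Hcx Hyx Hcy).
exact: H3.
Qed.

Lemma lmul_catl (A B C : seq word) : lmul (A ++ B) C = lmul A C ++ lmul B C.
Proof. by rewrite /lmul map_cat flatten_cat. Qed.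

Lemma lmul_map_cat (x : word) (B C : seq word) : lmul [seq x ++ y | y <- B] C = [seq x ++ y | y <- lmul B C].
Proof.
elim: B => //= y B IH; rewrite lmul_cons IH map_cat -map_comp.
by congr (_ ++ _); apply: eq_map => z /=; rewrite catA.
Qed.

Lemma lmulA (A B C : seq word) : lmul (lmul A B) C = lmul A (lmul B C).
Proof. by elim: A => //= x A IH; rewrite !lmul_cons lmul_catl IH lmul_map_cat. Qed.

Lemma lmul_catr (A B C : seq word) : peq (nsum (lmul A (B ++ C))) (nsum (lmul A B ++ lmul A C)).
Proof.
move=> w; rewrite nsum_cat nsum_lmul (mul_extr _ (nsum_cat B C)) mul_addr /nc_add.
by rewrite !nsum_lmul.
Qed.

Lemma lmul_unitl (A : seq word) : lmul [:: [::]] A = A.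
Proof. by rewrite lmul1l map_id. Qed.

Lemma lmul_unitr (A : seq word) : lmul A [:: [::]] = A.
Proof. by rewrite lmul1r; elim: A => //= x A ->; rewrite cats0. Qed.

Lemma lmul11 (u v : word) : lmul [:: u] [:: v] = [:: u ++ v].
Proof. by rewrite lmul1l. Qed.

Lemma lmul_map_l (T : Type) (f : T -> word) (L : seq T) (x : word) :
  lmul [:: x] (map f L) = map (fun t => x ++ f t) L.
Proof. by rewrite lmul1l -map_comp. Qed.

Lemma lmul_map_r (T : Type) (f : T -> word) (L : seq T) (x : word) :
  lmul (map f L) [:: x] = map (fun t => f t ++ x) L.
Proof. by rewrite lmul1r -map_comp. Qed.

Lemma LC_flatten (T : eqType) (F G : T -> seq word) (s : seq T) :
  (forall a, a \in s -> LC (F a) (G a)) -> LC (flatten (map F s)) (flatten (map G s)).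
Proof.
elim: s => [|a s IH] H /=; first exact: LC_refl.
apply: LC_cat; first by apply: H; rewrite inE eqxx.
by apply: IH => b Hb; apply: H; rewrite inE Hb orbT.
Qed.

Lemma perm_flatten_cat (T : Type) (F G : T -> seq word) (s : seq T) :
  perm_eq (flatten [seq F a ++ G a | a <- s]) (flatten (map F s) ++ flatten (map G s)).
Proof.
elim: s => [|a s IH] //=.
rewrite -!catA perm_cat2l.
apply: (perm_trans (perm_cat (perm_refl (G a)) IH)).
by rewrite perm_catCA.
Qed.

End Words.

Section Chains.
Variables (d : Order.disp_t) (P : finPOrderType d).
Local Notation word := (seq P).
Local Notation nc := (ncpoly P).

Fixpoint chains (X : {set P}) (k : nat) {struct k} : seq word :=
  if k is k'.+1 then
    flatten [seq [seq a :: c | c <- chains [set y in X | y < a] k'] | a <- enum X]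
  else [:: [::]].

Definition ischain (X : {set P}) (k : nat) (w : word) :=
  [&& size w == k, all (fun a => a \in X) w & sorted (@gtr _ P) w].

Lemma path_gtr (a : P) (c : word) : path (@gtr _ P) a c = all (fun y => y < a) c && sorted (@gtr _ P) c.
Proof. by rewrite path_sortedE //; exact: gtr_trans. Qed.

Lemma chainsP (X : {set P}) (k : nat) (w : word) : (w \in chains X k) = ischain X k w.
Proof.
rewrite /ischain; elim: k X w => [|k IH] X w /=.
  by rewrite inE; case: w.
apply/flatten_mapP/idP.
  case=> a; rewrite mem_enum => Ha /mapP [c Hc ->].
  move: Hc; rewrite IH => /and3P [Hs Hall Hso] /=.
  rewrite eqSS Hs Ha path_gtr Hso /= !andbT.
  apply/andP; split; apply/allP => y Hy; move: (allP Hall y Hy); rewrite inE;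
    by case/andP.
case: w => // a c /and3P [Hs /andP [Ha Hall] Hso].
exists a; first by rewrite mem_enum.
apply/mapP; exists c => //.
move: Hso; rewrite /= path_gtr => /andP [Hlt Hso].
rewrite IH -(eqSS (size c)) Hs Hso /= andbT.
apply/allP => y Hy; rewrite inE (allP Hall y Hy) (allP Hlt y Hy).
by [].
Qed.

Lemma uniq_flatten_map (T : eqType) (F : T -> seq word) (s : seq T) :
  uniq s -> (forall a, a \in s -> uniq (F a)) ->
  (forall a b w, a \in s -> b \in s -> w \in F a -> w \in F b -> a = b) ->
  uniq (flatten (map F s)).
Proof.
elim: s => [|a s IH] //= /andP [Has Hs] HF Hdis.
rewrite cat_uniq HF ?inE ?eqxx // IH //; last first.
- by move=> x y w Hx Hy; apply: Hdis; rewrite inE ?Hx ?Hy orbT.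
- by move=> x Hx; apply: HF; rewrite inE Hx orbT.
rewrite andbT; apply/hasP => [[w /flatten_mapP [b Hb Hwb] Hwa]].
have Hab : a = b by apply: Hdis Hwa Hwb; rewrite inE ?eqxx ?Hb ?orbT.
by move: Has; rewrite Hab Hb.
Qed.

Lemma chains_uniq (X : {set P}) (k : nat) : uniq (chains X k).
Proof.
elim: k X => [|k IH] X //=.
apply: uniq_flatten_map; first exact: enum_uniq.
  by move=> a _; rewrite map_inj_uniq ?IH // => x y [].
by move=> a b w _ _ /mapP [c _ ->] /mapP [c' _ []].
Qed.

Lemma nsum_chains (X : {set P}) (k : nat) (w : word) :
  nsum (chains X k) w = (nat_of_bool (ischain X k w))%:Z.
Proof. by rewrite /nsum count_uniq_mem ?chains_uniq // chainsP. Qed.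

Lemma elemP_chains (X : {set P}) (k : nat) : peq (elemP k%:Z X) (nsum (chains X k)).
Proof.
move=> w; rewrite nsum_chains /elemP /ischain eqz_nat.
by case: ifP.
Qed.

Lemma elemP_neg (X : {set P}) (n : nat) : peq (elemP (Negz n) X) (@nc_zero _ P).
Proof. by move=> w; rewrite /elemP. Qed.

Lemma chains0 (X : {set P}) : chains X 0 = [:: [::]]. Proof. by []. Qed.

Lemma chains1 (X : {set P}) : chains X 1 = [seq [:: a] | a <- enum X].
Proof. by rewrite /= flatten_map1. Qed.

Lemma chainsS (X : {set P}) (k : nat) :
  chains X k.+1 = flatten [seq [seq a :: c | c <- chains [set y in X | y < a] k] | a <- enum X].
Proof. by []. Qed.

Lemma chains_sub_split (X Y : {set P}) (k : nat) : Y \subset X ->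
  perm_eq (chains X k) (chains Y k ++ [seq c <- chains X k | ~~ all (fun a => a \in Y) c]).
Proof.
move=> HYX.
rewrite -(perm_filterC (fun c => all (fun a => a \in Y) c) (chains X k)).
apply: perm_cat => //.
apply: uniq_perm; rewrite ?filter_uniq ?chains_uniq //.
move=> w; rewrite mem_filter !chainsP /ischain.
apply/andP/idP.
  by case=> Hall /and3P [-> _ ->]; rewrite Hall.
case/and3P=> Hs Hall Hso; split => //; rewrite Hs Hso andbT.
by apply/allP => a Ha; apply: (subsetP HYX); apply: (allP Hall).
Qed.

Lemma chains_split_max (X : {set P}) (m : P) (j : nat) : m \in X ->
  (forall y, y \in X -> ~~ (m < y)) ->
  perm_eq (chains X j.+1)
    (chains (X :\ m) j.+1 ++ [seq m :: c | c <- chains [set y in X | y < m] j]).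
Proof.
move=> Hm Hmax.
apply: uniq_perm; rewrite ?chains_uniq //.
  rewrite cat_uniq chains_uniq map_inj_uniq ?chains_uniq ?andbT; last by move=> x y [].
  apply/hasP => [[w /mapP [c _ ->]]].
  rewrite chainsP /ischain /= => /and3P [_ /andP [] ].
  by rewrite !inE eqxx.
move=> w; rewrite mem_cat !chainsP /ischain.
apply/idP/idP.
  case: w => // a c /and3P [Hs /andP [Ha Hall] Hso].
  move: (Hso); rewrite /= path_gtr => /andP [Hlt Hso'].
  case: (eqVneq a m) => [Ham|Ham].
    apply/orP; right; apply/mapP; exists c; last by rewrite Ham.
    rewrite chainsP /ischain -(eqSS (size c)) Hs Hso' andbT.
    apply/allP => y Hy; rewrite inE (allP Hall y Hy) /=.
    by rewrite -Ham (allP Hlt y Hy).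
  apply/orP; left; apply/and3P; split => //; last by rewrite /= ?path_gtr Hlt Hso'.
  rewrite /= !inE Ham Ha /=.
  apply/allP => y Hy; rewrite !inE (allP Hall y Hy) andbT.
  apply/eqP => Hym; move: (allP Hlt y Hy); rewrite Hym => Hma.
  by move: (Hmax a Ha); rewrite Hma.
case/orP.
  case/and3P=> -> Hall ->; rewrite andbT /=.
  by apply/allP => y Hy; move: (allP Hall y Hy); rewrite inE => /andP [].
case/mapP => c; rewrite chainsP /ischain => /and3P [Hs Hall Hso] ->.
rewrite /= eqSS Hs Hm path_gtr Hso !andbT /=.
apply/andP; split; apply/allP => y Hy; move: (allP Hall y Hy); rewrite inE;
  by case/andP.
Qed.

End Chains.

Section Proj.
Variables (d : Order.disp_t) (P : finPOrderType d).
Local Notation word := (seq P).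
Local Notation nc := (ncpoly P).

Definition avoid (x : P) (p : nc) : nc := fun w => if x \in w then 0%R else p w.
Definition present (x : P) (p : nc) : nc := nc_sub p (avoid x p).

Lemma presentE x p w : present x p w = if x \in w then p w else 0%R.
Proof. by rewrite /present /nc_sub /nc_add /nc_opp /avoid; case: ifP; rewrite ?subr0 ?subrr. Qed.

Lemma avoid_gen x (u1 u2 : word) : (x \in u1) = (x \in u2) ->
  in_Iplac (nc_sub (nc_word u1) (nc_word u2)) ->
  in_Iplac (avoid x (nc_sub (nc_word u1) (nc_word u2))).
Proof.
move=> Hx H; case Hx1: (x \in u1).
  apply: Izero => w; rewrite /avoid /nc_sub /nc_add /nc_opp /nc_word.
  have [->|N1] := eqVneq w u1; first by rewrite Hx1.
  have [->|N2] := eqVneq w u2; first by rewrite -Hx Hx1.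
  by case: ifP => //; rewrite subr0.
apply: Iext H => w; rewrite /avoid /nc_sub /nc_add /nc_opp /nc_word.
case Hw: (x \in w) => //.
have [E1|N1] := eqVneq w u1; first by move: Hw; rewrite E1 Hx1.
have [E2|N2] := eqVneq w u2; first by move: Hw; rewrite E2 -Hx Hx1.
by rewrite subr0.
Qed.

Lemma avoid_I x p : in_Iplac p -> in_Iplac (avoid x p).
Proof.
elim=> {p}.
- by apply: Izero => w; rewrite /avoid; case: ifP.
- move=> g Hg; have HI := Ip_gen Hg.
  move: Hg HI => [a [b [c [[_ _ _ ->]|[[_ _ _ ->]|[_ _ _ ->]]]]]] HI;
    apply: avoid_gen HI; rewrite !inE;
    by case: (x == a); case: (x == b); case: (x == c).
- move=> p q _ Hp _ Hq; apply: Icomb Hp Hq _ => w.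
  by rewrite /avoid /nc_add; case: ifP; rewrite ?addr0.
- move=> p _ Hp; apply: Iopp Hp _ => w.
  by rewrite /avoid /nc_opp; case: ifP; rewrite ?oppr0.
- move=> v p _ Hp; case Hxv: (x \in v).
    apply: Izero => w; rewrite /avoid mul_wordl.
    case Hpre: ((size v <= size w)%N && (take (size v) w == v)); last by case: ifP.
    move/andP: Hpre => [_ /eqP Ht].
    by rewrite -{1}(cat_take_drop (size v) w) Ht mem_cat Hxv.
  apply: Iext (Ip_mull v Hp) => w; rewrite /avoid !mul_wordl.
  case Hpre: ((size v <= size w)%N && (take (size v) w == v)); last by case: ifP.
  move/andP: Hpre => [_ /eqP Ht].
  by rewrite [in RHS](_ : (x \in w) = (x \in drop (size v) w)) // -{1}(cat_take_drop (size v) w) Ht mem_cat Hxv.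
- move=> v p _ Hp; case Hxv: (x \in v).
    apply: Izero => w; rewrite /avoid mul_wordr.
    case Hpre: ((size v <= size w)%N && (drop (size w - size v) w == v)); last by case: ifP.
    move/andP: Hpre => [_ /eqP Ht].
    by rewrite -{1}(cat_take_drop (size w - size v) w) Ht mem_cat Hxv orbT.
  apply: Iext (Ip_mulr v Hp) => w; rewrite /avoid !mul_wordr.
  case Hpre: ((size v <= size w)%N && (drop (size w - size v) w == v)); last by case: ifP.
  move/andP: Hpre => [_ /eqP Ht].
  by rewrite [in RHS](_ : (x \in w) = (x \in take (size w - size v) w)) // -{1}(cat_take_drop (size w - size v) w) Ht mem_cat Hxv orbF.
- by move=> p q H _ Hp; apply: Iext Hp => w; rewrite /avoid H.
Qed.

Lemma present_I x p : in_Iplac p -> in_Iplac (present x p).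
Proof. by move=> H; apply: Icombs H (avoid_I x H) _. Qed.

Lemma avoid_mul x (p q : nc) : peq (avoid x (nc_mul p q)) (nc_mul (avoid x p) (avoid x q)).
Proof.
move=> w; rewrite /avoid /nc_mul; case: ifP => Hw.
  rewrite big1 // => i _.
  have : (x \in take i w) || (x \in drop i w) by rewrite -mem_cat cat_take_drop.
  by case/orP => ->; rewrite ?mul0r ?mulr0.
apply: eq_bigr => i _.
have : (x \in take i w) || (x \in drop i w) = false by rewrite -mem_cat cat_take_drop.
by case: (x \in take i w); case: (x \in drop i w).
Qed.

Lemma avoid_elemP x (k : int) (X : {set P}) : peq (avoid x (elemP k X)) (elemP k (X :\ x)).
Proof.
move=> w; rewrite /avoid /elemP; case: ifP => Hw.
  case: ifP => // /and3P [_ /allP H _].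
  by move: (H x Hw); rewrite !inE eqxx.
congr (if _ then _ else _); congr [&& _, _ & _].
apply: eq_in_all => y Hy; rewrite !inE.
by case: eqP => // Hyx; move: Hw; rewrite -Hyx Hy.
Qed.

Definition cf (X : {set P}) (k l : int) : nc :=
  nc_sub (nc_mul (elemP k X) (elemP l X)) (nc_mul (elemP l X) (elemP k X)).

Lemma avoid_cf x X k l : peq (avoid x (cf X k l)) (cf (X :\ x) k l).
Proof.
move=> w; rewrite /cf.
have -> : avoid x (nc_sub (nc_mul (elemP k X) (elemP l X)) (nc_mul (elemP l X) (elemP k X))) w
   = nc_sub (avoid x (nc_mul (elemP k X) (elemP l X))) (avoid x (nc_mul (elemP l X) (elemP k X))) w.
  by rewrite /avoid /nc_sub /nc_add /nc_opp; case: ifP; rewrite ?subr0.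
rewrite /nc_sub /nc_add /nc_opp !avoid_mul.
by rewrite !(mul_extl _ (avoid_elemP _ _ _)) !(mul_extr _ (avoid_elemP _ _ _)).
Qed.

Lemma sorted_cmp (u : word) x y : sorted (@gtr _ P) u -> x \in u -> y \in u -> x >=< y.
Proof.
elim: u => // a u IH /= Hs; move: (Hs); rewrite path_gtr => /andP [Hlt Hs'].
rewrite !inE => /orP [/eqP ->|Hx] /orP [/eqP ->|Hy].
- exact: comparablexx.
- by apply: gt_comparable; apply: (allP Hlt).
- by apply: lt_comparable; apply: (allP Hlt).
- exact: IH.
Qed.

Lemma no3 (u v : word) x y z : sorted (@gtr _ P) u -> sorted (@gtr _ P) v ->
  ~~ (x >=< y) -> ~~ (y >=< z) -> ~~ (x >=< z) ->
  x \in u ++ v -> y \in u ++ v -> z \in u ++ v -> False.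
Proof.
move=> Hu Hv Hxy Hyz Hxz; rewrite !mem_cat.
case/orP=> Hx; case/orP=> Hy; case/orP=> Hz.
all: first [ by move: Hxy; rewrite (sorted_cmp Hu Hx Hy)
           | by move: Hxy; rewrite (sorted_cmp Hv Hx Hy)
           | by move: Hyz; rewrite (sorted_cmp Hu Hy Hz)
           | by move: Hyz; rewrite (sorted_cmp Hv Hy Hz)
           | by move: Hxz; rewrite (sorted_cmp Hu Hx Hz)
           | by move: Hxz; rewrite (sorted_cmp Hv Hx Hz) ].
Qed.

Lemma elemP_prod0 (a b : int) (X : {set P}) (u v : word) x y z :
  ~~ (x >=< y) -> ~~ (y >=< z) -> ~~ (x >=< z) ->
  x \in u ++ v -> y \in u ++ v -> z \in u ++ v -> (elemP a X u * elemP b X v = 0)%R.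
Proof.
move=> Hxy Hyz Hxz Hx Hy Hz; rewrite /elemP.
case: ifP => [/and3P [_ _ Hu]|]; last by rewrite mul0r.
case: ifP => [/and3P [_ _ Hv]|]; last by rewrite mulr0.
by exfalso; apply: (no3 Hu Hv Hxy Hyz Hxz Hx Hy Hz).
Qed.

Lemma antichain_red (X : {set P}) x y z k l :
  ~~ (x >=< y) -> ~~ (y >=< z) -> ~~ (x >=< z) ->
  in_Iplac (cf (X :\ x) k l) -> in_Iplac (cf (X :\ y) k l) -> in_Iplac (cf (X :\ z) k l) ->
  in_Iplac (cf X k l).
Proof.
move=> Hxy Hyz Hxz H1 H2 H3.
set q := cf X k l.
have Ax : in_Iplac (avoid x q) by apply: Iext H1 => w; rewrite avoid_cf.
have Ay : in_Iplac (avoid y q) by apply: Iext H2 => w; rewrite avoid_cf.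
have Az : in_Iplac (avoid z q) by apply: Iext H3 => w; rewrite avoid_cf.
have Z : in_Iplac (present z (present y (present x q))).
  apply: Izero => w; rewrite !presentE.
  case: ifP => // Hz; case: ifP => // Hy; case: ifP => // Hx.
  rewrite /q /cf /nc_sub /nc_add /nc_opp /nc_mul.
  rewrite !big1 ?subrr // => i _;
    by apply: (elemP_prod0 _ _ _ Hxy Hyz Hxz); rewrite cat_take_drop.
have Yz : in_Iplac (avoid z (present y (present x q))).
  apply: Iext (present_I y (present_I x Az)) => w.
  by rewrite /avoid !presentE; case: (z \in w); case: (y \in w); case: (x \in w).
have Yy : in_Iplac (present y (present x q)).
  by apply: Icomb Yz Z _ => w; rewrite /avoid !presentE; case: (z \in w); case: (y \in w); case: (x \in w); rewrite ?add0r ?addr0.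
have Xy : in_Iplac (avoid y (present x q)).
  apply: Iext (present_I x Ay) => w.
  by rewrite /avoid !presentE; case: (y \in w); case: (x \in w).
have Xx : in_Iplac (present x q).
  by apply: Icomb Xy Yy _ => w; rewrite /avoid !presentE; case: (y \in w); case: (x \in w); rewrite ?add0r ?addr0.
by apply: Icomb Ax Xx _ => w; rewrite /avoid !presentE; case: (x \in w); rewrite ?add0r ?addr0.
Qed.

End Proj.

Section Case1.
Variables (d : Order.disp_t) (P : finPOrderType d).
Local Notation word := (seq P).
Local Notation nc := (ncpoly P).

Definition comm_ok (X : {set P}) := forall k l : nat,
  LC (lmul (chains X k) (chains X l)) (lmul (chains X l) (chains X k)).

Lemma nsum_lmul_perm (A A' B B' : seq word) : perm_eq A A' -> perm_eq B B' ->
  peq (nsum (lmul A B)) (nsum (lmul A' B')).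
Proof.
move=> H1 H2 w; rewrite !nsum_lmul.
by rewrite (mul_extl _ (nsum_perm H1)) (mul_extr _ (nsum_perm H2)).
Qed.

Lemma lmul_sing (s : seq P) (B : seq word) :
  lmul [seq [:: a] | a <- s] B = flatten [seq [seq a :: y | y <- B] | a <- s].
Proof. by rewrite /lmul -map_comp. Qed.

Lemma map_flat (T U : Type) (f : word -> U) (F : T -> seq word) (s : seq T) :
  map f (flatten (map F s)) = flatten [seq map f (F a) | a <- s].
Proof. by elim: s => //= a s IH; rewrite map_cat IH. Qed.

Lemma lmul1 (m : P) (B : seq word) : lmul [:: [:: m]] B = [seq m :: y | y <- B].
Proof. by rewrite lmul1l. Qed.

Lemma R_head (D : {set P}) (a : P) (j : nat) (c : word) :
  c \in chains D j -> ~~ all (fun y => y \in [set y in D | y < a]) c ->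
  exists x c', [/\ c = x :: c', ~~ (x < a) & x \in D].
Proof.
rewrite chainsP /ischain; case: c => // x c' /and3P [_ /andP [Hx Hall] Hs] Hn.
exists x, c'; split => //; apply/negP => Hxa; move/negP: Hn; apply.
move: Hs; rewrite /= path_gtr => /andP [Hlt _].
rewrite /= !inE Hx Hxa /=; apply/allP => y Hy; rewrite inE (allP Hall y Hy) /=.
exact: lt_trans (allP Hlt y Hy) Hxa.
Qed.

Lemma chains_below (D : {set P}) (a : P) (j : nat) (c : word) :
  c \in chains [set y in D | y < a] j -> sorted (@gtr _ P) (a :: c) /\ (forall y, y \in c -> y \in D).
Proof.
rewrite chainsP /ischain => /and3P [_ Hall Hs]; split.
  rewrite /= path_gtr Hs andbT; apply/allP => y Hy.
  by move: (allP Hall y Hy); rewrite inE => /andP [].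
by move=> y Hy; move: (allP Hall y Hy); rewrite inE => /andP [].
Qed.

Lemma KL (D : {set P}) (m : P) (j : nat) : (forall y, y \in D -> y < m) ->
  LC (lmul (chains D j.+1) [:: [:: m]] ++ lmul [:: [:: m]] (lmul (chains D 1) (chains D j)))
     (lmul [:: [:: m]] (chains D j.+1) ++ lmul (chains D 1) (lmul [:: [:: m]] (chains D j))).
Proof.
move=> HD.
set Ea := fun a => chains [set y in D | y < a] j.
have Ha : LC (lmul (chains D j.+1) [:: [:: m]])
             (flatten [seq [seq a :: m :: c | c <- Ea a] | a <- enum D]).
  rewrite lmul1r chainsS map_flat.
  apply: LC_flatten => a; rewrite mem_enum => HaD.
  rewrite -map_comp; apply: LC_map => c Hc /=.
  have [Hs Hc'] := chains_below Hc.
  apply: wcG => //; first by move=> y Hy; apply: HD; apply: Hc'.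
  by rewrite lt_gtF // HD.
have Hb : lmul (chains D 1) (lmul [:: [:: m]] (chains D j))
          = flatten [seq [seq a :: m :: c | c <- chains D j] | a <- enum D].
  by rewrite chains1 lmul_sing lmul1; congr flatten; apply: eq_map => a; rewrite -map_comp.
have Hc : lmul [:: [:: m]] (lmul (chains D 1) (chains D j))
          = flatten [seq [seq m :: a :: c | c <- chains D j] | a <- enum D].
  by rewrite chains1 lmul_sing lmul1 map_flat; congr flatten; apply: eq_map => a; rewrite -map_comp.
have Hd : lmul [:: [:: m]] (chains D j.+1)
          = flatten [seq [seq m :: a :: c | c <- Ea a] | a <- enum D].
  by rewrite lmul1 chainsS map_flat; congr flatten; apply: eq_map => a; rewrite -map_comp.
rewrite Hb Hc Hd.
apply: LC_trans (LC_cat Ha (LC_refl _)) _.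
apply: LC_perm (perm_flatten_cat _ _ _) (perm_flatten_cat _ _ _) _.
apply: LC_flatten => a; rewrite mem_enum => HaD.
have HY : [set y in D | y < a] \subset D by apply/subsetP => y; rewrite inE => /andP [].
have Hp := chains_sub_split j HY.
set R := [seq c <- chains D j | ~~ all (fun y => y \in [set y in D | y < a]) c] in Hp.
apply: (LC_perm (A:=[seq a :: m :: c | c <- Ea a] ++ [seq m :: a :: c | c <- Ea a] ++ [seq m :: a :: c | c <- R])
                 (B:=[seq a :: m :: c | c <- Ea a] ++ [seq m :: a :: c | c <- Ea a] ++ [seq a :: m :: c | c <- R])).
- by rewrite perm_cat2l -map_cat perm_map // perm_sym.
- rewrite perm_catCA perm_cat2l -map_cat perm_map // perm_sym.
  exact: Hp.
apply: LC_cat; first exact: LC_refl.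
apply: LC_cat; first exact: LC_refl.
apply: LC_map => c; rewrite mem_filter => /andP [Hn Hc0].
have [x [c' [-> Hxa HxD]]] := R_head Hc0 Hn.
have := wc_suf c' (wc_rel2 Hxa (HD x HxD) (HD a HaD)).
by [].
Qed.

Lemma MMz (Z : {set P}) (z : P) (a b : nat) : (forall y, y \in Z -> y < z) ->
  LC (lmul (lmul [:: [:: z]] (chains Z a)) (lmul [:: [:: z]] (chains Z b)))
     (lmul [:: [:: z; z]] (lmul (chains Z a) (chains Z b))).
Proof.
move=> HZ.
have E1 : lmul (lmul [:: [:: z]] (chains Z a)) (lmul [:: [:: z]] (chains Z b))
  = lmul (lmul [:: [:: z]] (lmul (chains Z a) [:: [:: z]])) (chains Z b) by rewrite !lmulA.
have E2 : lmul [:: [:: z; z]] (lmul (chains Z a) (chains Z b))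
  = lmul (lmul [:: [:: z; z]] (chains Z a)) (chains Z b) by rewrite lmulA.
rewrite E1 E2; apply: LC_mulr.
rewrite lmul1r lmul1 -map_comp lmul1l.
apply: LC_map => c Hc /=.
apply: wcG; last by rewrite ltxx.
  rewrite /= path_gtr; move: Hc; rewrite chainsP /ischain => /and3P [_ Hall ->].
  by rewrite andbT; apply/allP => y Hy; apply: HZ; apply: (allP Hall).
by move=> y Hy; apply: HZ; move: Hc; rewrite chainsP /ischain => /and3P [_ Hall _]; apply: (allP Hall).
Qed.

End Case1.

Section Case1b.
Local Opaque lmul.
Variables (d : Order.disp_t) (P : finPOrderType d).
Local Notation word := (seq P).

Ltac expand := repeat (rewrite ?(lmul_catl (chains _ _)) ?(lmul_catl (lmul _ _))
   ?(lmul_catr _ (chains _ _)) ?(lmul_catr _ (lmul _ _)) ?(nsum_cat (chains _ _)) ?(nsum_cat (lmul _ _)) /nc_add).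

Lemma case_max (S : {set P}) (m : P) : m \in S -> (forall y, y \in S -> y != m -> y < m) ->
  comm_ok (S :\ m) -> comm_ok S.
Proof.
move=> Hm Hmax IH k l.
case: k => [|k']; first by rewrite chains0 lmul_unitl lmul_unitr; exact: LC_refl.
case: l => [|l']; first by rewrite chains0 lmul_unitl lmul_unitr; exact: LC_refl.
have HD : forall y, y \in S :\ m -> y < m.
  by move=> y; rewrite !inE => /andP [Hym HyS]; apply: Hmax.
have Hset : [set y in S | y < m] = S :\ m.
  apply/setP => y; rewrite !inE; apply/idP/idP.
    by case/andP => -> Hy; rewrite andbT; apply/eqP => E; move: Hy; rewrite E ltxx.
  by case/andP => Hy HyS; rewrite HyS; apply: Hmax.
have Hsp j : perm_eq (chains S j.+1) (chains (S :\ m) j.+1 ++ lmul [:: [:: m]] (chains (S :\ m) j)).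
  have Hmx : forall y, y \in S -> ~~ (m < y).
    move=> y Hy; case: (eqVneq y m) => [->|Hne]; first by rewrite ltxx.
    by rewrite lt_gtF // Hmax.
  by have := chains_split_max j Hm Hmx; rewrite Hset lmul1.
set D := S :\ m.
set m1 := [:: [:: m]].
have IH1 := IH k'.+1 l'.+1.
have I4 := LC_mull m1 (IH k'.+1 l').
have I5 := LC_mull m1 (IH k' l'.+1).
have I3 := LC_mull [:: [:: m; m]] (IH k' l').
have I6 := LC_mull (lmul (chains D 1) m1) (IH k' l').
have I7 := LC_mull (lmul m1 (chains D 1)) (IH k' l').
have KLk := LC_mulr (chains D l') (KL k' HD).
have KLl := LC_mulr (chains D k') (KL l' HD).
have MMkl := MMz k' l' HD.
have MMlk := MMz l' k' HD.
apply: (Iext _ (Ip_add IH1 (Ip_add KLk (Ip_add (Ip_opp KLl) (Ip_add (Ip_opp I7)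
  (Ip_add I4 (Ip_add I6 (Ip_add I5 (Ip_add MMkl (Ip_add (Ip_opp MMlk) I3)))))))))) => w.
rewrite /nc_sub /nc_add /nc_opp.
rewrite (nsum_lmul_perm (Hsp k') (Hsp l')) (nsum_lmul_perm (Hsp l') (Hsp k')).
expand.
rewrite !lmulA.
ring.
Qed.

End Case1b.

Section Case3a.
Variables (d : Order.disp_t) (P : finPOrderType d).
Local Notation word := (seq P).

Lemma perm_of_nsum (A B : seq word) : peq (nsum A) (nsum B) -> perm_eq A B.
Proof.
move=> H; apply/allP => x _; apply/eqP.
by have := H x; rewrite /nsum => [[]].
Qed.

Lemma perm_lmul (A A' B B' : seq word) : perm_eq A A' -> perm_eq B B' ->
  perm_eq (lmul A B) (lmul A' B').
Proof. by move=> H1 H2; apply: perm_of_nsum; apply: nsum_lmul_perm. Qed.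

Definition QB (D A : {set P}) (i : nat) :=
  [seq C <- chains D i | ~~ all (fun a => a \in A) C].

Lemma QB0 (D A : {set P}) : QB D A 0 = [::].
Proof. by []. Qed.

Lemma QBnil (D A : {set P}) (i : nat) : (forall y, y \in D -> y \in A) -> QB D A i = [::].
Proof.
move=> H; rewrite /QB (@eq_in_filter _ _ pred0) ?filter_pred0 // => C.
rewrite chainsP /ischain => /and3P [_ Hall _] /=.
by apply/negbTE; rewrite negbK; apply/allP => y Hy; apply: H; apply: (allP Hall).
Qed.

Lemma chain_mem_lt (x : P) (C : word) y : sorted (@gtr _ P) (x :: C) -> y \in C -> y < x.
Proof. by rewrite /= path_gtr => /andP [H _] Hy; apply: (allP H). Qed.

Lemma QBS (D A : {set P}) (m' b : P) (i : nat) :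
  (forall y, y \in D -> (y \in A) = (y < m')) ->
  (forall y z, y \in D -> z \in D -> ~~ (y < m') -> ~~ (z < m') -> y = z) ->
  b \in D -> ~~ (b < m') ->
  perm_eq (QB D A i.+1) (lmul [:: [:: b]] (chains [set y in D | y < b] i)).
Proof.
move=> HA UB HbD Hb.
apply: uniq_perm; first by rewrite filter_uniq ?chains_uniq.
  by rewrite lmul1 map_inj_uniq ?chains_uniq // => x y [].
move=> C; rewrite mem_filter lmul1 chainsP /ischain.
apply/idP/idP.
  case/andP=> Hn; case: C Hn => // x C' Hn /and3P [Hs /andP [HxD Hall] Hso].
  have [y Hy HyA] : exists2 y, y \in x :: C' & y \notin A.
    by apply/hasP; rewrite has_predC.
  have HyD : y \in D by move: Hy; rewrite inE => /orP [/eqP ->|Hy] //; apply: (allP Hall).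
  have Hy' : ~~ (y < m') by rewrite -HA.
  have Hyb : y = b := UB y b HyD HbD Hy' Hb.
  have Hxb : x = b.
    move: Hy; rewrite inE => /orP [/eqP <-|HyC'] //.
    have Hyx := chain_mem_lt Hso HyC'.
    have Hx' : ~~ (x < m').
      by apply/negP => Hx; move/negP: Hy'; apply; exact: lt_trans Hyx Hx.
    have := UB x b HxD HbD Hx' Hb; move=> Hxb; exfalso.
    by move: Hyx; rewrite Hxb -Hyb ltxx.
  apply/mapP; exists C'; last by rewrite Hxb.
  rewrite chainsP /ischain -(eqSS (size C')) Hs.
  move: Hso; rewrite /= path_gtr => /andP [Hlt ->]; rewrite andbT.
  apply/allP => z Hz; rewrite inE (allP Hall z Hz) /=.
  by rewrite -Hxb (allP Hlt z Hz).
case/mapP=> C' HC' ->; move: HC'; rewrite chainsP /ischain => /and3P [Hs Hall Hso].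
rewrite /= eqSS Hs HbD /= HA // (negbTE Hb) /= path_gtr Hso !andbT.
apply/andP; split; apply/allP => z Hz; move: (allP Hall z Hz); rewrite inE;
  by case/andP.
Qed.

Lemma R1 (D A : {set P}) (m m' : P) (i : nat) :
  A \subset D ->
  (forall y, y \in D -> y < m) ->
  (forall y, y \in D -> (y \in A) = (y < m')) ->
  (forall y z, y \in D -> z \in D -> ~~ (y < m') -> ~~ (z < m') -> y = z) ->
  (forall y, y \in D -> ~~ (m' < y)) ->
  simP m' m ->
  LC (lmul (lmul [:: [:: m]] (chains A i ++ QB D A i)) [:: [:: m']])
     (lmul [:: [:: m; m']] (chains A i) ++ lmul [:: [:: m'; m]] (QB D A i)).
Proof.
move=> HAD HDm HA UB Hmax' Hmm'.
rewrite lmul1 lmul1r -map_comp.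
rewrite map_cat; apply: LC_cat.
  rewrite lmul1l; apply: LC_map => C HC /=.
  move: (HC); rewrite chainsP /ischain => /and3P [_ Hall Hso].
  have HCD : forall y, y \in C -> y \in D by move=> y Hy; apply: (subsetP HAD); apply: (allP Hall).
  apply: wcG.
  - rewrite /= path_gtr Hso andbT; apply/allP => y Hy; exact: HDm (HCD y Hy).
  - by move=> y Hy; rewrite -HA ?HCD //; apply: (allP Hall).
  - by case/andP: Hmm'.
rewrite lmul1l; apply: LC_map => C; rewrite mem_filter => /andP [Hn HC] /=.
move: HC Hn; rewrite chainsP /ischain; case: C => // x C' /and3P [_ /andP [HxD Hall] Hso] Hn.
have Hx' : ~~ (x < m').
  apply/negP => Hx; move/negP: Hn; apply; rewrite /= HA // Hx /=.
  apply/allP => y Hy; rewrite HA; last by apply: (allP Hall).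
  exact: lt_trans (chain_mem_lt Hso Hy) Hx.
have HC'm' : forall y, y \in C' -> y < m'.
  move=> y Hy; apply/contraT => Hy'.
  have := UB y x (allP Hall y Hy) HxD Hy' Hx'; move=> Hyx.
  by move: (chain_mem_lt Hso Hy); rewrite Hyx ltxx.
have H1 : wc (x :: C' ++ [:: m']) (x :: m' :: C') by apply: wcG => //; exact: Hmax'.
have H2 := wc_pre [:: m] H1.
apply: wc_trans H2 _.
have Hsim1 : simP x m' by rewrite /simP Hx' Hmax'.
have H3 := wc_rel3 Hsim1 Hmm' (HDm x HxD).
exact: wc_suf C' H3.
Qed.

End Case3a.

Section Case3b.
Variables (d : Order.disp_t) (P : finPOrderType d).
Local Notation word := (seq P).

Lemma chainsU_lt (U : {set P}) (b : P) (i : nat) (C : word) :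
  (forall y, y \in U -> y < b) -> C \in chains U i -> sorted (@gtr _ P) (b :: C).
Proof.
move=> HU; rewrite chainsP /ischain => /and3P [_ Hall Hs].
by rewrite /= path_gtr Hs andbT; apply/allP => y Hy; apply: HU; apply: (allP Hall).
Qed.

Lemma chainsU_mem (U : {set P}) (i : nat) (C : word) y :
  C \in chains U i -> y \in C -> y \in U.
Proof. by rewrite chainsP /ischain => /and3P [_ Hall _] Hy; apply: (allP Hall). Qed.

Lemma Y2a (U : {set P}) (m m' b b' : P) (i j : nat) :
  simP b' b -> simP b m' -> b' < m' ->
  (forall y, y \in U -> y < b) -> (forall y, y \in U -> y < b') ->
  LC (lmul [:: [:: m; m']] (lmul (lmul [:: [:: b']] (chains U i)) (lmul [:: [:: b]] (chains U j))))
     (lmul [:: [:: m; b; m'; b']] (lmul (chains U i) (chains U j))).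
Proof.
move=> H1 H2 H3 HU HU'.
have E1 : lmul [:: [:: m; m']] (lmul (lmul [:: [:: b']] (chains U i)) (lmul [:: [:: b]] (chains U j)))
  = lmul (lmul (lmul [:: [:: m; m'; b']] (chains U i)) [:: [:: b]]) (chains U j).
  by rewrite !lmulA -(lmulA [:: [:: m; m']] [:: [:: b']]) lmul11.
have E2 : lmul [:: [:: m; b; m'; b']] (lmul (chains U i) (chains U j))
  = lmul (map (fun C => [:: m; b; m'; b'] ++ C) (chains U i)) (chains U j).
  by rewrite -lmulA lmul1l.
rewrite E1 E2; apply: LC_mulr.
rewrite lmul1l lmul1r -map_comp; apply: LC_map => C HC /=.
have S1 : wc (b' :: C ++ [:: b]) (b' :: b :: C).
  apply: wcG; first exact: chainsU_lt HU' HC.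
    by move=> y Hy; apply: HU; apply: chainsU_mem HC Hy.
  by case/andP: H1.
have S2 := wc_pre [:: m; m'] S1.
apply: wc_trans S2 _.
have S3 := wc_ctx [:: m] C (wc_rel3 H1 H2 H3).
exact: S3.
Qed.

Lemma Y2b (U : {set P}) (m m' b b' : P) (i j : nat) :
  simP b' b -> simP b m' -> simP m' m -> b < m ->
  (forall y, y \in U -> y < b) -> (forall y, y \in U -> y < b') ->
  LC (lmul [:: [:: m'; m]] (lmul (lmul [:: [:: b]] (chains U i)) (lmul [:: [:: b']] (chains U j))))
     (lmul [:: [:: m; b; m'; b']] (lmul (chains U i) (chains U j))).
Proof.
move=> H1 H2 H3 H4 HU HU'.
have E1 : lmul [:: [:: m'; m]] (lmul (lmul [:: [:: b]] (chains U i)) (lmul [:: [:: b']] (chains U j)))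
  = lmul (lmul (lmul [:: [:: m'; m; b]] (chains U i)) [:: [:: b']]) (chains U j).
  by rewrite !lmulA -(lmulA [:: [:: m'; m]] [:: [:: b]]) lmul11.
have E2 : lmul [:: [:: m; b; m'; b']] (lmul (chains U i) (chains U j))
  = lmul (map (fun C => [:: m; b; m'; b'] ++ C) (chains U i)) (chains U j).
  by rewrite -lmulA lmul1l.
rewrite E1 E2; apply: LC_mulr.
rewrite lmul1l lmul1r -map_comp; apply: LC_map => C HC /=.
have S1 : wc (b :: C ++ [:: b']) (b :: b' :: C).
  apply: wcG; first exact: chainsU_lt HU HC.
    by move=> y Hy; apply: HU'; apply: chainsU_mem HC Hy.
  by case/andP: H1.
have S2 := wc_pre [:: m'; m] S1.
apply: wc_trans S2 _.
have S3 := wc_suf (b' :: C) (wc_sym (wc_rel3 H2 H3 H4)).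
exact: S3.
Qed.

Lemma Y1 (D A : {set P}) (m' : P) (i j : nat) :
  (forall y, y \in D -> (y \in A) = (y < m')) ->
  (forall y z, y \in D -> z \in D -> ~~ (y < m') -> ~~ (z < m') -> y = z) ->
  (forall b, b \in D -> comm_ok [set y in D | y < b]) ->
  LC (lmul (QB D A i) (QB D A j)) (lmul (QB D A j) (QB D A i)).
Proof.
move=> HA UB IHU.
case: (boolP [exists y in D, ~~ (y < m')]) => [/existsP [b /andP [HbD Hb]]|Hno]; last first.
  have Hall : forall y, y \in D -> y \in A.
    move=> y Hy; rewrite HA //; apply/contraT => Hy'; case/negP: Hno.
    by apply/existsP; exists y; rewrite Hy.
  rewrite !(QBnil _ Hall) lmul_nil; exact: LC_refl.
case: i => [|i]; first by rewrite QB0 lmul_nil lmul_nilr; exact: LC_refl.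
case: j => [|j]; first by rewrite QB0 lmul_nil lmul_nilr; exact: LC_refl.
set U := [set y in D | y < b].
have HU : forall y, y \in U -> y < b by move=> y; rewrite inE => /andP [].
have Pi := QBS i HA UB HbD Hb.
have Pj := QBS j HA UB HbD Hb.
apply: (LC_perm (A := lmul (lmul [:: [:: b]] (chains U i)) (lmul [:: [:: b]] (chains U j)))
                (B := lmul (lmul [:: [:: b]] (chains U j)) (lmul [:: [:: b]] (chains U i)))).
- by rewrite perm_sym; apply: perm_lmul.
- by rewrite perm_sym; apply: perm_lmul.
apply: LC_trans (MMz i j HU) _.
apply: LC_trans (LC_sym (MMz j i HU)).
apply: LC_mull; exact: IHU.
Qed.

End Case3b.

Section Case3c.
Variables (d : Order.disp_t) (P : finPOrderType d).
Local Notation word := (seq P).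

Lemma lmul1_cat (u : word) (B C : seq word) : lmul [:: u] (B ++ C) = lmul [:: u] B ++ lmul [:: u] C.
Proof. by rewrite !lmul1l map_cat. Qed.

Lemma simP_sym (a b : P) : simP a b = simP b a.
Proof. by rewrite /simP andbC. Qed.

Lemma Y2 (D D' A : {set P}) (m m' : P) (i j : nat) :
  (forall y, y \in D -> y < m) -> (forall y, y \in D' -> y < m') ->
  (forall y, y \in D -> (y \in A) = (y < m')) -> (forall y, y \in D' -> (y \in A) = (y < m)) ->
  (forall y z, y \in D -> z \in D -> ~~ (y < m') -> ~~ (z < m') -> y = z) ->
  (forall y z, y \in D' -> z \in D' -> ~~ (y < m) -> ~~ (z < m) -> y = z) ->
  (forall y, y \in D -> ~~ (m' < y)) -> (forall y, y \in D' -> ~~ (m < y)) ->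
  simP m m' ->
  (forall b, b \in D -> comm_ok [set y in D | y < b]) ->
  (forall b b', b \in D -> ~~ (b < m') -> b' \in D' -> ~~ (b' < m) ->
     [set y in D | y < b] = [set y in D' | y < b'] /\ simP b' b) ->
  LC (lmul [:: [:: m; m']] (lmul (QB D' A i) (QB D A j)) ++ lmul [:: [:: m'; m]] (lmul (QB D A i) (QB D' A j)))
     (lmul [:: [:: m; m']] (lmul (QB D' A j) (QB D A i)) ++ lmul [:: [:: m'; m]] (lmul (QB D A j) (QB D' A i))).
Proof.
move=> HDm HDm' HA HA' UB UB' Hmx' Hmx Hmm' IHU HU.
case: (boolP [exists y in D, ~~ (y < m')]) => [/existsP [b /andP [HbD Hb]]|Hno]; last first.
  have Hall : forall y, y \in D -> y \in A.
    move=> y Hy; rewrite HA //; apply/contraT => Hy'; case/negP: Hno.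
    by apply/existsP; exists y; rewrite Hy.
  rewrite !(QBnil _ Hall) lmul_nil !lmul_nilr; exact: LC_refl.
case: (boolP [exists y in D', ~~ (y < m)]) => [/existsP [b' /andP [HbD' Hb']]|Hno]; last first.
  have Hall : forall y, y \in D' -> y \in A.
    move=> y Hy; rewrite HA' //; apply/contraT => Hy'; case/negP: Hno.
    by apply/existsP; exists y; rewrite Hy.
  rewrite !(QBnil _ Hall) lmul_nil !lmul_nilr; exact: LC_refl.
case: i => [|i]; first by rewrite !QB0 lmul_nil !lmul_nilr; exact: LC_refl.
case: j => [|j]; first by rewrite !QB0 lmul_nil !lmul_nilr; exact: LC_refl.
have [HUU Hbb'] := HU b b' HbD Hb HbD' Hb'.
set U := [set y in D | y < b] in HUU *.
have HUb : forall y, y \in U -> y < b by move=> y; rewrite inE => /andP [].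
have HUb' : forall y, y \in U -> y < b' by move=> y; rewrite HUU inE => /andP [].
have Pi := QBS i HA UB HbD Hb.
have Pj := QBS j HA UB HbD Hb.
have P'i := QBS i HA' UB' HbD' Hb'.
have P'j := QBS j HA' UB' HbD' Hb'.
rewrite -HUU in P'i P'j.
have Hbm' : simP b m' by rewrite /simP Hb Hmx'.
have Hm'm : simP m' m by rewrite simP_sym.
have Hbm : b < m := HDm b HbD.
have Hb'm' : b' < m' := HDm' b' HbD'.
set b1 := [:: [:: b]]; set b1' := [:: [:: b']].
apply: (LC_perm (A := lmul [:: [:: m; m']] (lmul (lmul b1' (chains U i)) (lmul b1 (chains U j)))
                   ++ lmul [:: [:: m'; m]] (lmul (lmul b1 (chains U i)) (lmul b1' (chains U j))))
                (B := lmul [:: [:: m; m']] (lmul (lmul b1' (chains U j)) (lmul b1 (chains U i)))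
                   ++ lmul [:: [:: m'; m]] (lmul (lmul b1 (chains U j)) (lmul b1' (chains U i))))).
- by apply: perm_cat; apply: perm_lmul => //; rewrite perm_sym; apply: perm_lmul.
- by apply: perm_cat; apply: perm_lmul => //; rewrite perm_sym; apply: perm_lmul.
have Ya1 := Y2a m i j Hbb' Hbm' Hb'm' HUb HUb'.
have Ya2 := Y2a m j i Hbb' Hbm' Hb'm' HUb HUb'.
have Yb1 := Y2b i j Hbb' Hbm' Hm'm Hbm HUb HUb'.
have Yb2 := Y2b j i Hbb' Hbm' Hm'm Hbm HUb HUb'.
apply: LC_trans (LC_cat Ya1 Yb1) _.
apply: LC_trans (LC_sym (LC_cat Ya2 Yb2)).
have IU := LC_mull [:: [:: m; b; m'; b']] (IHU b HbD i j).
exact: (LC_cat IU IU).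
Qed.

End Case3c.

Section Case3d.
Variables (d : Order.disp_t) (P : finPOrderType d).
Local Notation word := (seq P).
Local Opaque lmul.

Ltac lexpand := repeat (rewrite -?lmulA ?(lmul_catl (chains _ _)) ?(lmul_catl (lmul _ _))
   ?(lmul_catl (QB _ _ _)) ?lmul1_cat
   ?(lmul_catr _ (chains _ _)) ?(lmul_catr _ (lmul _ _)) ?(lmul_catr _ (QB _ _ _))
   ?(nsum_cat (chains _ _)) ?(nsum_cat (lmul _ _)) ?(nsum_cat (QB _ _ _)) /nc_add).

Lemma Wcore (D D' A : {set P}) (m m' : P) (i j : nat) :
  A \subset D -> A \subset D' ->
  (forall y, y \in D -> y < m) -> (forall y, y \in D' -> y < m') ->
  (forall y, y \in D -> (y \in A) = (y < m')) -> (forall y, y \in D' -> (y \in A) = (y < m)) ->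
  (forall y z, y \in D -> z \in D -> ~~ (y < m') -> ~~ (z < m') -> y = z) ->
  (forall y z, y \in D' -> z \in D' -> ~~ (y < m) -> ~~ (z < m) -> y = z) ->
  (forall y, y \in D -> ~~ (m' < y)) -> (forall y, y \in D' -> ~~ (m < y)) ->
  simP m m' ->
  comm_ok D -> comm_ok D' ->
  (forall b, b \in D -> comm_ok [set y in D | y < b]) ->
  (forall b, b \in D' -> comm_ok [set y in D' | y < b]) ->
  (forall b b', b \in D -> ~~ (b < m') -> b' \in D' -> ~~ (b' < m) ->
     [set y in D | y < b] = [set y in D' | y < b'] /\ simP b' b) ->
  LC (lmul (lmul [:: [:: m]] (chains D i)) (lmul [:: [:: m']] (chains D' j))
      ++ lmul (lmul [:: [:: m']] (chains D' i)) (lmul [:: [:: m]] (chains D j)))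
     (lmul (lmul [:: [:: m]] (chains D j)) (lmul [:: [:: m']] (chains D' i))
      ++ lmul (lmul [:: [:: m']] (chains D' j)) (lmul [:: [:: m]] (chains D i))).
Proof.
move=> HAD HAD' HDm HDm' HA HA' UB UB' Hmx' Hmx Hmm' IHD IHD' IHU IHU' HU.
have Hm'm : simP m' m by rewrite simP_sym.
have SD k : perm_eq (chains D k) (chains A k ++ QB D A k) by apply: chains_sub_split.
have SD' k : perm_eq (chains D' k) (chains A k ++ QB D' A k) by apply: chains_sub_split.
have R1m k := R1 k HAD HDm HA UB Hmx' Hm'm.
have R1m' k := R1 k HAD' HDm' HA' UB' Hmx Hmm'.
have H1ij := LC_mulr (chains A j ++ QB D' A j) (R1m i).
have H1ji := LC_mulr (chains A i ++ QB D' A i) (R1m j).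
have H2ij := LC_mulr (chains A j ++ QB D A j) (R1m' i).
have H2ji := LC_mulr (chains A i ++ QB D A i) (R1m' j).
have HDx := LC_mull [:: [:: m'; m]]
  (LC_perm (perm_lmul (SD i) (SD j)) (perm_lmul (SD j) (SD i)) (IHD i j)).
have HDx' := LC_mull [:: [:: m; m']]
  (LC_perm (perm_lmul (SD' i) (SD' j)) (perm_lmul (SD' j) (SD' i)) (IHD' i j)).
have HY1 := LC_mull [:: [:: m'; m]] (Y1 i j HA UB IHU).
have HY1' := LC_mull [:: [:: m; m']] (Y1 i j HA' UB' IHU').
have HY2 := Y2 i j HDm HDm' HA HA' UB UB' Hmx' Hmx Hmm' IHU HU.
apply: (Iext _ (Ip_add H1ij (Ip_add (Ip_opp H1ji) (Ip_add H2ij (Ip_add (Ip_opp H2ji)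
  (Ip_add HDx' (Ip_add (Ip_opp HY1') (Ip_add HDx (Ip_add (Ip_opp HY1) HY2))))))))) => w.
rewrite /nc_sub /nc_add /nc_opp.
rewrite !(nsum_cat (lmul _ _)) /nc_add.
rewrite (nsum_lmul_perm (perm_lmul (perm_refl _) (SD i)) (perm_lmul (perm_refl _) (SD' j))).
rewrite (nsum_lmul_perm (perm_lmul (perm_refl _) (SD' i)) (perm_lmul (perm_refl _) (SD j))).
rewrite (nsum_lmul_perm (perm_lmul (perm_refl _) (SD j)) (perm_lmul (perm_refl _) (SD' i))).
rewrite (nsum_lmul_perm (perm_lmul (perm_refl _) (SD' j)) (perm_lmul (perm_refl _) (SD i))).
lexpand.
ring.
Qed.

End Case3d.

Section Case3e.
Variables (d : Order.disp_t) (P : finPOrderType d).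
Local Notation word := (seq P).

Lemma incmp (a b : P) : ~~ (a < b) -> ~~ (b < a) -> a != b -> ~~ (a >=< b).
Proof.
move=> H1 H2 H3; rewrite /Order.comparable !le_eqVlt (negbTE H1) (negbTE H2).
by rewrite (negbTE H3) eq_sym (negbTE H3).
Qed.

Lemma free31_contra (x y z w : P) : free31 P -> x < y -> y < z ->
  ~~ (w >=< x) -> ~~ (w >=< y) -> ~~ (w >=< z) -> False.
Proof. by move=> H Hxy Hyz H1 H2 H3; apply: (H x y z w Hxy Hyz); split. Qed.

Lemma case_two_facts (S : {set P}) (m m' : P) :
  free31 P ->
  m \in S -> m' \in S -> m != m' ->
  (forall y, y \in S -> ~~ (m < y)) -> (forall y, y \in S -> ~~ (m' < y)) ->
  (forall x y z, x \in S -> y \in S -> z \in S ->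
     ~~ (x >=< y) -> ~~ (y >=< z) -> ~~ (x >=< z) -> False) ->
  forall y z, y \in [set y in S | y < m] -> z \in [set y in S | y < m] ->
    ~~ (y < m') -> ~~ (z < m') -> y = z.
Proof.
move=> H31 Hm Hm' Hmm' Hmax Hmax' Hw y z.
rewrite !inE => /andP [HyS Hym] /andP [HzS Hzm] Hy Hz.
have Hsim : forall u, u \in S -> u < m -> ~~ (u < m') -> ~~ (m' >=< u).
  move=> u HuS Hum Hu; apply: incmp; [exact: Hmax'|exact: Hu|].
  by apply/eqP => E; move: Hum; rewrite -E => Hm'm; move: (Hmax' m Hm); rewrite Hm'm.
have Hmm : ~~ (m' >=< m).
  apply: incmp; [exact: Hmax'|exact: Hmax|by rewrite eq_sym].
case: (eqVneq y z) => // Hyz; exfalso.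
case: (boolP (y >=< z)) => Hc; last first.
  apply: (Hw y z m' HyS HzS Hm' Hc); last by rewrite comparable_sym Hsim.
  by rewrite comparable_sym Hsim.
move: Hc; rewrite /Order.comparable !le_eqVlt (negbTE Hyz) eq_sym (negbTE Hyz) /=.
case/orP => Hlt.
  exact: (free31_contra H31 Hlt Hzm (Hsim y HyS Hym Hy) (Hsim z HzS Hzm Hz) Hmm).
exact: (free31_contra H31 Hlt Hym (Hsim z HzS Hzm Hz) (Hsim y HyS Hym Hy) Hmm).
Qed.

Lemma case_two_U (S : {set P}) (m m' b b' : P) :
  free31 P ->
  m \in S -> m' \in S -> m != m' ->
  (forall y, y \in S -> ~~ (m < y)) -> (forall y, y \in S -> ~~ (m' < y)) ->
  b \in [set y in S | y < m] -> ~~ (b < m') ->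
  b' \in [set y in S | y < m'] -> ~~ (b' < m) ->
  forall y, y \in S -> y < b -> y < b'.
Proof.
move=> H31 Hm Hm' Hmm' Hmax Hmax'.
rewrite !inE => /andP [HbS Hbm] Hb /andP [Hb'S Hb'm'] Hb' y HyS Hyb.
apply/contraT => Hyb'.
have Hbb1 : ~~ (b < b') by apply/negP => H; move/negP: Hb; apply; exact: lt_trans H Hb'm'.
have Hbb2 : ~~ (b' < b) by apply/negP => H; move/negP: Hb'; apply; exact: lt_trans H Hbm.
have Hbb : b' != b by apply/eqP => E; move: Hb'm'; rewrite E => H; move/negP: Hb; apply.
have Hy1 : ~~ (b' < y) by apply/negP => H; move/negP: Hbb2; apply; exact: lt_trans H Hyb.
have Hy2 : b' != y by apply/eqP => E; move/negP: Hbb2; apply; rewrite E.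
have Hm1 : b' != m by apply/eqP => E; move: (Hmax m' Hm'); rewrite -E Hb'm'.
exfalso; apply: (@free31_contra y b m b' H31 Hyb Hbm).
- by apply: incmp.
- by apply: incmp.
- by apply: incmp => //; apply: Hmax.
Qed.

End Case3e.

Section Case3f.
Variables (d : Order.disp_t) (P : finPOrderType d).
Local Notation word := (seq P).
Local Opaque lmul.

Ltac expand2 := repeat (rewrite ?(lmul_catl (chains _ _)) ?(lmul_catl (lmul _ _))
   ?(lmul_catr _ (chains _ _)) ?(lmul_catr _ (lmul _ _)) ?(nsum_cat (chains _ _)) ?(nsum_cat (lmul _ _)) /nc_add).

Lemma proper_sub (S X : {set P}) (m : P) : X \subset S -> m \in S -> m \notin X -> X \proper S.
Proof. by move=> H1 H2 H3; apply/properP; split => //; exists m. Qed.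

Lemma case_two (S : {set P}) (m m' : P) :
  free31 P ->
  m \in S -> m' \in S -> m != m' ->
  (forall y, y \in S -> ~~ (m < y)) -> (forall y, y \in S -> ~~ (m' < y)) ->
  (forall x y z, x \in S -> y \in S -> z \in S ->
     ~~ (x >=< y) -> ~~ (y >=< z) -> ~~ (x >=< z) -> False) ->
  (forall X : {set P}, X \proper S -> comm_ok X) ->
  comm_ok S.
Proof.
move=> H31 Hm Hm' Hmm' Hmax Hmax' Hw IH.
set D := [set y in S | y < m].
set D' := [set y in S | y < m'].
set A := [set y in S | (y < m) && (y < m')].
have HAD : A \subset D by apply/subsetP => y; rewrite !inE => /and3P [-> -> _].
have HAD' : A \subset D' by apply/subsetP => y; rewrite !inE => /and3P [-> _ ->].
have HDm : forall y, y \in D -> y < m by move=> y; rewrite inE => /andP [].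
have HDm' : forall y, y \in D' -> y < m' by move=> y; rewrite inE => /andP [].
have HA : forall y, y \in D -> (y \in A) = (y < m') by move=> y; rewrite !inE => /andP [-> ->].
have HA' : forall y, y \in D' -> (y \in A) = (y < m) by move=> y; rewrite !inE => /andP [-> ->]; rewrite andbT.
have UB := case_two_facts H31 Hm Hm' Hmm' Hmax Hmax' Hw.
have UB' := case_two_facts H31 Hm' Hm (negbT (introF eqP (fun E => (negP Hmm') (introT eqP (esym E))))) Hmax' Hmax Hw.
have Hmx' : forall y, y \in D -> ~~ (m' < y) by move=> y; rewrite inE => /andP [Hy _]; apply: Hmax'.
have Hmx : forall y, y \in D' -> ~~ (m < y) by move=> y; rewrite inE => /andP [Hy _]; apply: Hmax.
have Hsim : simP m m' by rewrite /simP Hmax // Hmax'.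
have HmD : m \notin D by rewrite inE ltxx andbF.
have HmD' : m' \notin D' by rewrite inE ltxx andbF.
have HDS : D \subset S by apply/subsetP => y; rewrite inE => /andP [].
have HDS' : D' \subset S by apply/subsetP => y; rewrite inE => /andP [].
have IHD : comm_ok D by apply: IH; exact: proper_sub HDS Hm HmD.
have IHD' : comm_ok D' by apply: IH; exact: proper_sub HDS' Hm' HmD'.
have IHU : forall b, b \in D -> comm_ok [set y in D | y < b].
  move=> b Hb; apply: IH; apply: (proper_sub _ Hm); last by rewrite !inE ltxx andbF.
  by apply/subsetP => y; rewrite !inE => /andP [/andP [] ].
have IHU' : forall b, b \in D' -> comm_ok [set y in D' | y < b].
  move=> b Hb; apply: IH; apply: (proper_sub _ Hm'); last by rewrite !inE ltxx andbF.
  by apply/subsetP => y; rewrite !inE => /andP [/andP [] ].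
have HU : forall b b', b \in D -> ~~ (b < m') -> b' \in D' -> ~~ (b' < m) ->
     [set y in D | y < b] = [set y in D' | y < b'] /\ simP b' b.
  move=> b b' Hb Hbn Hb' Hb'n.
  have U1 := case_two_U H31 Hm Hm' Hmm' Hmax Hmax' Hb Hbn Hb' Hb'n.
  have Hmm'' : m' != m by rewrite eq_sym.
  have U2 := case_two_U H31 Hm' Hm Hmm'' Hmax' Hmax Hb' Hb'n Hb Hbn.
  move: (Hb) (Hb'); rewrite !inE => /andP [HbS Hbm] /andP [Hb'S Hb'm'].
  split.
    apply/setP => y; rewrite !inE; apply/idP/idP.
      case/andP=> /andP [HyS Hym] Hyb; have Hyb' := U1 y HyS Hyb.
      by rewrite HyS Hyb' (lt_trans Hyb' Hb'm').
    case/andP=> /andP [HyS Hym] Hyb'; have Hyb := U2 y HyS Hyb'.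
    by rewrite HyS Hyb (lt_trans Hyb Hbm).
  rewrite /simP; apply/andP; split.
    by apply/negP => H; move/negP: Hb'n; apply; exact: lt_trans H Hbm.
  by apply/negP => H; move/negP: Hbn; apply; exact: lt_trans H Hb'm'.
move=> k l.
case: k => [|k']; first by rewrite chains0 lmul_unitl lmul_unitr; exact: LC_refl.
case: l => [|l']; first by rewrite chains0 lmul_unitl lmul_unitr; exact: LC_refl.
set T := S :\ m :\ m'.
have Hm'Sm : m' \in S :\ m by rewrite !inE eq_sym Hmm'.
have HmSm' : m \in S :\ m' by rewrite !inE Hmm'.
have HS j : perm_eq (chains S j.+1) (chains (S :\ m) j.+1 ++ lmul [:: [:: m]] (chains D j)).
  by rewrite lmul1; apply: chains_split_max.
have HSm j : perm_eq (chains (S :\ m) j.+1) (chains T j.+1 ++ lmul [:: [:: m']] (chains D' j)).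
  rewrite lmul1.
  have -> : D' = [set y in S :\ m | y < m'].
    apply/setP => y; rewrite !inE.
    by case: (eqVneq y m) => [->|_] //=; rewrite (negbTE (Hmax m' Hm')) andbF.
  apply: chains_split_max => // y; rewrite inE => /andP [_ Hy]; exact: Hmax'.
have HT : S :\ m' :\ m = T by apply/setP => y; rewrite !inE andbCA.
have HSm' j : perm_eq (chains (S :\ m') j.+1) (chains T j.+1 ++ lmul [:: [:: m]] (chains D j)).
  rewrite lmul1 -HT.
  have -> : D = [set y in S :\ m' | y < m].
    apply/setP => y; rewrite !inE.
    by case: (eqVneq y m') => [->|_] //=; rewrite (negbTE (Hmax' m Hm)) andbF.
  apply: chains_split_max => // y; rewrite inE => /andP [_ Hy]; exact: Hmax.
have HSS j : perm_eq (chains S j.+1)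
    (chains T j.+1 ++ lmul [:: [:: m']] (chains D' j) ++ lmul [:: [:: m]] (chains D j)).
  by apply: perm_trans (HS j) _; rewrite catA perm_cat2r.
have ISm : comm_ok (S :\ m).
  by apply: IH; apply: (proper_sub _ Hm); [apply: subD1set | rewrite !inE eqxx].
have ISm' : comm_ok (S :\ m').
  by apply: IH; apply: (proper_sub _ Hm'); [apply: subD1set | rewrite !inE eqxx].
have IT : comm_ok T.
  apply: IH; apply: (proper_sub _ Hm); last by rewrite !inE eqxx andbF.
  by apply/subsetP => y; rewrite !inE => /and3P [].
have HW := Wcore k' l' HAD HAD' HDm HDm' HA HA' UB UB' Hmx' Hmx Hsim IHD IHD' IHU IHU' HU.
apply: (Iext _ (Ip_add (ISm k'.+1 l'.+1) (Ip_add (ISm' k'.+1 l'.+1)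
   (Ip_add (Ip_opp (IT k'.+1 l'.+1)) HW)))) => w.
rewrite /nc_sub /nc_add /nc_opp.
rewrite (nsum_lmul_perm (HSS k') (HSS l')) (nsum_lmul_perm (HSS l') (HSS k')).
rewrite (nsum_lmul_perm (HSm k') (HSm l')) (nsum_lmul_perm (HSm l') (HSm k')).
rewrite (nsum_lmul_perm (HSm' k') (HSm' l')) (nsum_lmul_perm (HSm' l') (HSm' k')).
expand2.
ring.
Qed.

End Case3f.

Section Core.
Variables (d : Order.disp_t) (P : finPOrderType d).
Local Notation word := (seq P).

Lemma exists_max (S : {set P}) (x : P) : x \in S ->
  exists m, [/\ m \in S, x <= m & forall y, y \in S -> ~~ (m < y)].
Proof.
move=> Hx0.
suff H : forall (n : nat) (x : P), x \in S -> leq #|[set z in S | x < z]| n ->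
  exists m, [/\ m \in S, x <= m & forall y, y \in S -> ~~ (m < y)].
  exact: (H _ x Hx0 (leqnn _)).
clear Hx0; elim=> [|n IHn] {}x Hx Hc.
  exists x; split => // y Hy.
  apply/negP => Hxy; move: Hc; rewrite leqn0 cards_eq0 => /eqP E.
  have : y \in [set z in S | x < z] by rewrite inE Hy Hxy.
  by rewrite E inE.
case: (boolP [exists y in S, x < y]) => [/existsP [y /andP [Hy Hxy]]|Hno].
  have Hp : [set z in S | y < z] \proper [set z in S | x < z].
    apply/properP; split.
      by apply/subsetP => z; rewrite !inE => /andP [-> Hz]; exact: lt_trans Hxy Hz.
    by exists y; rewrite !inE ?Hy ?Hxy ?ltxx.
  have Hc' : leq #|[set z in S | y < z]| n.
    by rewrite -ltnS; apply: leq_trans (proper_card Hp) Hc.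
  have [m [Hm Hym Hmax]] := IHn y Hy Hc'.
  by exists m; split => //; apply: le_trans (ltW Hxy) Hym.
exists x; split => // y Hy.
by apply/negP => Hxy; move/negP: Hno; apply; apply/existsP; exists y; rewrite Hy.
Qed.

Lemma bridge (S : {set P}) (k l : nat) :
  peq (cf S k%:Z l%:Z)
      (nc_sub (nsum (lmul (chains S k) (chains S l))) (nsum (lmul (chains S l) (chains S k)))).
Proof.
move=> w; rewrite /cf /nc_sub /nc_add /nc_opp !nsum_lmul.
by rewrite !(mul_extl _ (elemP_chains _ _)) !(mul_extr _ (elemP_chains _ _)).
Qed.

Lemma chains_nil (S : {set P}) (k : nat) : (forall x, x \notin S) -> chains S k.+1 = [::].
Proof.
move=> H; rewrite chainsS.
have -> : enum S = [::] by apply/eqP; rewrite -size_eq0 -cardE cards_eq0; apply/eqP/setP => x; rewrite inE (negbTE (H x)).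
by [].
Qed.

Theorem core (S : {set P}) : free31 P -> comm_ok S.
Proof.
move=> H31.
move: {2}#|S| (leqnn #|S|) => n; elim: n S => [|n IHn] S HS.
  have H0 : forall x, x \notin S.
    by move=> x; move: HS; rewrite leqn0 cards_eq0 => /eqP ->; rewrite inE.
  move=> k l; case: k => [|k]; first by rewrite chains0 lmul_unitl lmul_unitr; exact: LC_refl.
  by rewrite chains_nil // lmul_nil lmul_nilr; exact: LC_refl.
have IH : forall X : {set P}, X \proper S -> comm_ok X.
  move=> X HX; apply: IHn; rewrite -ltnS; exact: leq_trans (proper_card HX) HS.
case: (boolP [exists x in S, exists y in S, exists z in S,
    [&& ~~ (x >=< y), ~~ (y >=< z) & ~~ (x >=< z)]]).
  case/existsP=> x /andP [Hx /existsP [y /andP [Hy /existsP [z /andP [Hz /and3P [H1 H2 H3]]]]]].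
  move=> k l.
  have IHx : comm_ok (S :\ x) by apply: IH; apply: properD1.
  have IHy : comm_ok (S :\ y) by apply: IH; apply: properD1.
  have IHz : comm_ok (S :\ z) by apply: IH; apply: properD1.
  apply: Iext (bridge S k l) _.
  apply: (antichain_red H1 H2 H3).
  - by apply: Iext (IHx k l) => w; rewrite bridge.
  - by apply: Iext (IHy k l) => w; rewrite bridge.
  - by apply: Iext (IHz k l) => w; rewrite bridge.
move=> Hno.
have Hw : forall x y z, x \in S -> y \in S -> z \in S ->
     ~~ (x >=< y) -> ~~ (y >=< z) -> ~~ (x >=< z) -> False.
  move=> x y z Hx Hy Hz H1 H2 H3; move/negP: Hno; apply.
  apply/existsP; exists x; rewrite Hx; apply/existsP; exists y; rewrite Hy.
  by apply/existsP; exists z; rewrite Hz H1 H2 H3.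
case: (boolP [exists x, x \in S]) => [/existsP [x Hx]|Hemp]; last first.
  have H0 : forall x, x \notin S by move=> x; apply/negP => Hx; move/negP: Hemp; apply; apply/existsP; exists x.
  move=> k l; case: k => [|k]; first by rewrite chains0 lmul_unitl lmul_unitr; exact: LC_refl.
  by rewrite chains_nil // lmul_nil lmul_nilr; exact: LC_refl.
have [m [Hm _ Hmax]] := exists_max Hx.
case: (boolP [forall y in S, (y != m) ==> (y < m)]) => [Hall|Hnall].
  apply: (case_max Hm); last by apply: IH; apply: properD1.
  by move=> y Hy Hym; move/forall_inP: Hall => /(_ y Hy); rewrite Hym.
have [y Hy Hyn] : exists2 y, y \in S & (y != m) && ~~ (y < m).
  move/forall_inPn: Hnall => [y Hy]; rewrite negb_imply => Hyn; by exists y.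
have [m' [Hm' Hym' Hmax']] := exists_max Hy.
have Hmm' : m != m'.
  apply/eqP => E; move: Hym'; rewrite -E le_eqVlt; case/andP: Hyn => /negbTE -> /negbTE ->.
  by [].
have Hcomp : forall a b, a \in S -> b \in S -> a != b -> (forall z, z \in S -> ~~ (a < z)) ->
   (forall z, z \in S -> ~~ (b < z)) -> ~~ (a >=< b).
  move=> a b Ha Hb Hab Ha' Hb'; apply: incmp => //; [exact: Ha'|exact: Hb'].
exact: (case_two H31 Hm Hm' Hmm' Hmax Hmax' Hw IH).
Qed.

End Core.

Theorem mainTheorem1 (d : Order.disp_t) (P : finPOrderType d) :
  free31 P ->
  forall (k l : int) (S : {set P}),
    in_Iplac (nc_sub (nc_mul (elemP k S) (elemP l S))
                     (nc_mul (elemP l S) (elemP k S))).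
Proof.
move=> H31 k l S.
case: k => [k|k]; case: l => [l|l].
- apply: Iext (core S H31 k l) => w; rewrite -(bridge S k l w).
  by [].
- apply: Izero => w; rewrite /nc_sub /nc_add /nc_opp.
  by rewrite ?(mul_extr _ (elemP_neg _ _)) ?(mul_extl _ (elemP_neg _ _)) ?mul_0r ?mul_0l subrr.
- apply: Izero => w; rewrite /nc_sub /nc_add /nc_opp.
  by rewrite ?(mul_extr _ (elemP_neg _ _)) ?(mul_extl _ (elemP_neg _ _)) ?mul_0r ?mul_0l subrr.
- apply: Izero => w; rewrite /nc_sub /nc_add /nc_opp.
  by rewrite ?(mul_extr _ (elemP_neg _ _)) ?(mul_extl _ (elemP_neg _ _)) ?mul_0r ?mul_0l subrr.
Qed.
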